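(* Let $G$ be a number all of whose options are numbers, and let $H$ be any game with $L(H)\neq\emptyset$. Then every Left option $G^L\in L(G)$ is strictly dominated in $G\mathbin{:}H$, i.e. there is a Left option $K$ of $G\mathbin{:}H$ with $G^L<K$.
   Context: Games are short normal-play combinatorial games, written $G\cong\{L(G)\mid R(G)\}$ with $L(G)$, $R(G)$ the Left and Right options; $<,\le,=$ denote the usual order and equality of game values. The ordinal sum is defined recursively by $G\mathbin{:}H\cong\{L(G),\,G\mathbin{:}L(H)\mid R(G),\,G\mathbin{:}R(H)\}$ (moving in $H$ keeps $G$; moving in $G$ discards $H$). A number is a game $G$ with $G^L<G<G^R$ for all $G^L\in L(G)$, $G^R\in R(G)$ (short numbers have values in the dyadic rationals). *)

(* Defs.v *)
From Stdlib Require Import List Arith.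
Import ListNotations.

Inductive game : Type := Game : list game -> list game -> game.

Definition Lopts (g : game) : list game := let 'Game l _ := g in l.
Definition Ropts (g : game) : list game := let 'Game _ r := g in r.

(* birthday-like size, used only as fuel bound for the order *)
Fixpoint gsize (g : game) : nat :=
  match g with
  | Game l r => S (fold_right (fun x acc => gsize x + acc) 0 l
                   + fold_right (fun x acc => gsize x + acc) 0 r)
  end.

(* Computed with fuel; gsize G + gsize H strictly decreases on each recursive
   call, so the fuel gsize G + gsize H suffices. *)
Fixpoint le_fuel (n : nat) (g h : game) : bool :=
  match n with
  | 0 => true
  | S n' =>
      forallb (fun gl => negb (le_fuel n' h gl)) (Lopts g)
      && forallb (fun hr => negb (le_fuel n' hr g)) (Ropts h)
  end.

Definition gle (g h : game) : Prop := le_fuel (gsize g + gsize h) g h = true.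
Definition glt (g h : game) : Prop := gle g h /\ ~ gle h g.

Fixpoint osum (g h : game) : game :=
  match h with
  | Game hl hr => Game (Lopts g ++ map (osum g) hl) (Ropts g ++ map (osum g) hr)
  end.

Definition is_number (g : game) : Prop :=
  (forall gl, In gl (Lopts g) -> glt gl g) /\
  (forall gr, In gr (Ropts g) -> glt g gr).

(* Main.v *)
Require Import Defs.
From Stdlib Require Import List Arith Lia.
Import ListNotations.

Lemma fold_in (x : game) l : In x l -> gsize x <= fold_right (fun x acc => gsize x + acc) 0 l.
Proof. induction l as [|a l IHl]; simpl; [tauto|]; intros [->|H]; [lia|]; specialize (IHl H); lia. Qed.

Lemma sizeL g x : In x (Lopts g) -> gsize x < gsize g.
Proof. destruct g as [l r]; simpl; intros H; apply fold_in in H; lia. Qed.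
Lemma sizeR g x : In x (Ropts g) -> gsize x < gsize g.
Proof. destruct g as [l r]; simpl; intros H; apply fold_in in H; lia. Qed.
Lemma size_pos g : 0 < gsize g.
Proof. destruct g; simpl; lia. Qed.

Lemma forallb_ext_in' {A} (f g : A -> bool) l :
  (forall x, In x l -> f x = g x) -> forallb f l = forallb g l.
Proof. induction l as [|a l IHl]; simpl; intros H; auto.
  rewrite H by auto. rewrite IHl by auto. reflexivity. Qed.

Lemma fuel_indep n : forall m g h, gsize g + gsize h <= n -> gsize g + gsize h <= m ->
  le_fuel n g h = le_fuel m g h.
Proof.
  induction n as [|n IH]; intros m g h Hn Hm.
  - pose proof (size_pos g); lia.
  - destruct m as [|m]; [pose proof (size_pos g); lia|]. simpl.
    f_equal.
    + apply forallb_ext_in'. intros x Hx. f_equal. apply IH;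
      pose proof (sizeL g x Hx); lia.
    + apply forallb_ext_in'. intros x Hx. f_equal. apply IH;
      pose proof (sizeR h x Hx); lia.
Qed.

Lemma gle_iff g h : gle g h <-> (forall gl, In gl (Lopts g) -> ~ gle h gl) /\
  (forall hr, In hr (Ropts h) -> ~ gle hr g).
Proof.
  unfold gle. destruct (gsize g + gsize h) eqn:E; [pose proof (size_pos g); lia|].
  simpl. rewrite Bool.andb_true_iff, !forallb_forall.
  assert (EL : forall x, In x (Lopts g) -> le_fuel n h x = le_fuel (gsize h + gsize x) h x)
    by (intros x Hx; apply fuel_indep; pose proof (sizeL g x Hx); lia).
  assert (ER : forall x, In x (Ropts h) -> le_fuel n x g = le_fuel (gsize x + gsize g) x g)
    by (intros x Hx; apply fuel_indep; pose proof (sizeR h x Hx); lia).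
  split; intros [A B]; split; intros x Hx.
  - specialize (A x Hx). rewrite EL in A by auto. apply Bool.negb_true_iff in A. congruence.
  - specialize (B x Hx). rewrite ER in B by auto. apply Bool.negb_true_iff in B. congruence.
  - rewrite EL by auto. specialize (A x Hx).
    destruct (le_fuel _ h x); auto; exfalso; auto.
  - rewrite ER by auto. specialize (B x Hx).
    destruct (le_fuel _ x g); auto; exfalso; auto.
Qed.

Lemma gle_refl_aux n : forall g, gsize g < n -> gle g g.
Proof.
  induction n as [|n IH]; intros g Hg; [lia|].
  apply gle_iff; split; intros x Hx Hle; apply gle_iff in Hle; destruct Hle as [A B].
  - apply (A x Hx). apply IH. pose proof (sizeL g x Hx); lia.
  - apply (B x Hx). apply IH. pose proof (sizeR g x Hx); lia.
Qed.
Lemma gle_refl g : gle g g.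
Proof. exact (gle_refl_aux (S (gsize g)) g (le_n _)). Qed.

Lemma gle_trans_aux n : forall a b c, gsize a + gsize b + gsize c < n ->
  gle a b -> gle b c -> gle a c.
Proof.
  induction n as [|n IH]; intros a b c Hs Hab Hbc; [lia|].
  pose proof Hab as Hab'; pose proof Hbc as Hbc'.
  apply gle_iff in Hab as [A1 A2]; apply gle_iff in Hbc as [B1 B2].
  apply gle_iff; split.
  - intros al Hal Hcal. apply (A1 al Hal).
    apply (IH b c al); auto. pose proof (sizeL a al Hal); lia.
  - intros cr Hcr Hcra. apply (B2 cr Hcr).
    apply (IH cr a b); auto. pose proof (sizeR c cr Hcr); lia.
Qed.
Lemma gle_trans a b c : gle a b -> gle b c -> gle a c.
Proof. apply (gle_trans_aux (S (gsize a + gsize b + gsize c))); lia. Qed.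

Lemma osum_L G X x : In x (Lopts G) -> In x (Lopts (osum G X)).
Proof. destruct X; simpl; intros; apply in_or_app; auto. Qed.

Lemma not_le_optL G X GL : In GL (Lopts G) -> ~ gle (osum G X) GL.
Proof.
  intros Hin Hle. apply gle_iff in Hle as [A _].
  apply (A GL (osum_L G X GL Hin)). apply gle_refl.
Qed.

Theorem proposition2p6 (G H : game) :
  is_number G ->
  (forall X, In X (Lopts G) -> is_number X) ->
  (forall X, In X (Ropts G) -> is_number X) ->
  Lopts H <> nil ->
  forall GL, In GL (Lopts G) ->
    exists K, In K (Lopts (osum G H)) /\ glt GL K.
Proof.
  intros [NL NR] HL _ HH GL HGL.
  destruct H as [hl hr]. destruct hl as [|X hl]; [simpl in HH; congruence|].
  exists (osum G X). split.
  { simpl. apply in_or_app. right. left. reflexivity. }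
  split; [|apply not_le_optL; auto].
  apply gle_iff; split.
  - intros gll Hgll Hle. apply gle_iff in Hle as [A _].
    apply (A GL (osum_L G X GL HGL)).
    destruct (HL GL HGL) as [NGL _]. apply (NGL gll Hgll).
  - destruct X as [xl xr]. simpl. intros r Hr Hle.
    apply in_app_or in Hr as [Hr|Hr].
    + destruct (NR r Hr) as [_ Hn]. apply Hn.
      apply (gle_trans r GL G); auto. apply (NL GL HGL).
    + apply in_map_iff in Hr as [y [<- _]].
      exact (not_le_optL G y GL HGL Hle).
Qed.
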